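(* Let $\mathrm{M}$ be a matroid on a finite set $E$, let $\mathcal{M}$ be a proper modular cut of its lattice of flats, and let $e\notin E$. If $F$ is a minimal element of $\mathcal{M}$, then $F\sqcup\{e\}$ is an irreducible flat of $\mathrm{M}\cup_{\mathcal{M}}e$.
   Context: Flats are ordered by inclusion, $\hat0$ is the smallest flat. Flats $F,G$ form a modular pair if $\operatorname{rk}(F\vee G)+\operatorname{rk}(F\wedge G)=\operatorname{rk}F+\operatorname{rk}G$. A modular cut is an upward-closed set $\mathcal{M}$ of flats such that $F\wedge G\in\mathcal{M}$ whenever $F,G\in\mathcal{M}$ form a modular pair; it is proper if $\hat0\notin\mathcal{M}$. The single-element extension $\mathrm{M}\cup_{\mathcal{M}}e$ is the matroid on $E\sqcup\{e\}$ with rank function $\operatorname{rk}(S)=\operatorname{rk}_{\mathrm{M}}(S)$ and $\operatorname{rk}(S\sqcup\{e\})=\operatorname{rk}_{\mathrm{M}}(S)$ if $\operatorname{cl}_{\mathrm{M}}(S)\in\mathcal{M}$ and $\operatorname{rk}_{\mathrm{M}}(S)+1$ otherwise ($S\subseteq E$). A flat $H$ is irreducible if the interval $[\hat0,H]$ of the lattice of flats admits only trivial decompositions as a product of intervals $[\hat0,H_1]\times\dots\times[\hat0,H_m]$ (equivalently $H$ is not the disjoint union of two nonempty flats whose ranks add up to $\operatorname{rk}H$). *)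

(* Defs.v *)
From mathcomp Require Import all_boot.
Set Implicit Arguments. Unset Strict Implicit. Unset Printing Implicit Defensive.

Section Matroids.
Variable T : finType.
Implicit Types (r : {set T} -> nat) (A B S F G H : {set T}).

Definition is_matroid_rank r : Prop :=
  [/\ forall A, r A <= #|A|,
      forall A B, A \subset B -> r A <= r B &
      forall A B, r (A :|: B) + r (A :&: B) <= r A + r B].

Definition cl r S : {set T} := [set x | r (x |: S) == r S].

Definition flat r F : Prop := forall x, x \notin F -> r F < r (x |: F).

(* bottom flat \hat 0 = cl(emptyset); meet of flats = intersection,
   join of flats = closure of the union *)
Definition bot_flat r : {set T} := cl r set0.
Definition fjoin r F G : {set T} := cl r (F :|: G).

Definition modular_pair r F G : Prop :=
  r (fjoin r F G) + r (F :&: G) = r F + r G.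

Definition is_modular_cut r (MC : {set {set T}}) : Prop :=
  [/\ forall F, F \in MC -> flat r F,
      forall F G, F \in MC -> flat r G -> F \subset G -> G \in MC &
      forall F G, F \in MC -> G \in MC -> modular_pair r F G ->
                  F :&: G \in MC].

Definition proper_modular_cut r (MC : {set {set T}}) : Prop :=
  is_modular_cut r MC /\ bot_flat r \notin MC.

Definition minimal_in (MC : {set {set T}}) F : Prop :=
  F \in MC /\ forall G, G \in MC -> G \subset F -> G = F.

(* A flat H is irreducible if the interval [\hat0, H] of the lattice of
   flats admits no nontrivial product decomposition
   [\hat0,H] ~= [\hat0,H1] x [\hat0,H2] with both factors nontrivial
   (H1, H2 <> \hat0). The isomorphism is an order isomorphism phi from
   pairs of flats (G1,G2), G1 <= H1, G2 <= H2, onto flats G <= H. *)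
Definition nontrivial_decomposition r H : Prop :=
  exists H1 H2 (phi : {set T} -> {set T} -> {set T}),
    [/\ [/\ flat r H1, H1 \subset H, flat r H2 & H2 \subset H],
        H1 <> bot_flat r /\ H2 <> bot_flat r,
        (forall G1 G2, flat r G1 -> G1 \subset H1 -> flat r G2 -> G2 \subset H2 ->
           flat r (phi G1 G2) /\ phi G1 G2 \subset H),
        (forall G, flat r G -> G \subset H -> exists G1 G2,
           [/\ flat r G1, G1 \subset H1, flat r G2, G2 \subset H2 & phi G1 G2 = G]) &
        (forall G1 G2 G1' G2',
           flat r G1 -> G1 \subset H1 -> flat r G2 -> G2 \subset H2 ->
           flat r G1' -> G1' \subset H1 -> flat r G2' -> G2' \subset H2 ->
           (phi G1 G2 \subset phi G1' G2' <-> (G1 \subset G1') /\ (G2 \subset G2')))].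

Definition irreducible_flat r H : Prop :=
  flat r H /\ ~ nontrivial_decomposition r H.

End Matroids.

(* Single-element extension M \cup_MC e on the ground type option T,
   the new element e being None. *)
Definition restrict_some (T : finType) (S : {set option T}) : {set T} :=
  [set x | Some x \in S].

Definition ext_rank (T : finType) (r : {set T} -> nat) (MC : {set {set T}})
    (S : {set option T}) : nat :=
  let S' := restrict_some S in
  if None \in S then (if cl r S' \in MC then r S' else (r S').+1) else r S'.

(* Main.v *)
Require Import Defs.
From mathcomp Require Import all_boot zify.
Set Implicit Arguments. Unset Strict Implicit. Unset Printing Implicit Defensive.

Section M.
Variable T : finType.
Variable r : {set T} -> nat.
Hypothesis hr : is_matroid_rank r.
Implicit Types (A B S G : {set T}).

Lemma r_card A : r A <= #|A|. Proof. by case: hr. Qed.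
Lemma r_mono A B : A \subset B -> r A <= r B. Proof. by case: hr => _ h _; apply: h. Qed.
Lemma r_sub A B : r (A :|: B) + r (A :&: B) <= r A + r B. Proof. by case: hr. Qed.
Lemma r0 : r set0 = 0. Proof. by apply/eqP; rewrite -leqn0 -(cards0 T) r_card. Qed.

Lemma r_add1 A y : r (y |: A) <= (r A).+1.
Proof.
have := r_sub [set y] A; have := r_card [set y]; rewrite cards1; lia.
Qed.

Lemma r_addS A y : r A <= r (y |: A).
Proof. by apply: r_mono; apply: subsetUr. Qed.

Lemma r_absorb S x y : r (y |: S) = r S -> r (x |: (y |: S)) = r (x |: S).
Proof.
move=> e; apply/eqP; rewrite eqn_leq; apply/andP; split; last first.
  by apply: r_mono; rewrite setUCA subsetUr.
have := r_sub (x |: S) (y |: S).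
have -> : (x |: S) :|: (y |: S) = x |: (y |: S).
  by apply/setP => z; rewrite !inE; case: (z == x); case: (z == y); case: (z \in S).
have := r_mono (A:=S) (B:=(x |: S) :&: (y |: S)).
rewrite subsetI !subsetUr => /(_ isT). lia.
Qed.

Lemma cl_absorb S y : r (y |: S) = r S -> cl r (y |: S) = cl r S.
Proof.
move=> e; apply/setP => x; rewrite !inE (r_absorb x e) e //.
Qed.

Lemma sub_cl S : S \subset cl r S.
Proof. by apply/subsetP => x xS; rewrite inE; rewrite (setUidPr _) // sub1set. Qed.

Lemma r_union_cl A B : B \subset cl r A -> r (A :|: B) = r A.
Proof.
move: {2}#|B| (leqnn #|B|) => n; elim: n B => [|n IH] B.
  rewrite leqn0 cards_eq0 => /eqP -> _; by rewrite setU0.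
move=> hB sB; case: (set_0Vmem B) => [->|[x xB]]; first by rewrite setU0.
have hB' : #|B :\ x| <= n by move: hB; rewrite (cardsD1 x B) xB.
have e1 := IH _ hB' (subset_trans (subsetDl _ _) sB).
have : x \in cl r A by apply: (subsetP sB).
rewrite inE => /eqP ex.
have -> : A :|: B = x |: (A :|: (B :\ x)).
  apply/setP => z; rewrite !inE; case: (eqVneq z x) => [->|]; by rewrite ?xB ?orbT.
have := r_sub (x |: A) (A :|: (B :\ x)).
have -> : (x |: A) :|: (A :|: (B :\ x)) = x |: (A :|: (B :\ x)).
  by apply/setP => z; rewrite !inE; case: (z == x); case: (z \in A).
have := r_mono (A:=A) (B:=(x |: A) :&: (A :|: (B :\ x))).
rewrite subsetI subsetUr subsetUl => /(_ isT).
have := r_addS (A :|: B :\ x) x.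
lia.
Qed.

Lemma r_cl S : r (cl r S) = r S.
Proof. by rewrite -{1}(setUidPr (sub_cl S)) r_union_cl. Qed.

Lemma cl_flat S : flat r (cl r S).
Proof.
move=> x xn; rewrite ltn_neqAle r_addS andbT; apply/negP => /eqP e.
move: xn; rewrite inE; apply/negP/negPn.
rewrite eqn_leq r_addS andbT.
have := r_mono (A:= x |: S) (B := x |: cl r S).
rewrite setUS ?sub_cl // => /(_ isT); rewrite -e r_cl //.
Qed.

Lemma cl_min S G : flat r G -> S \subset G -> cl r S \subset G.
Proof.
move=> fG sSG; apply/subsetP => z; rewrite inE => /eqP ez.
apply/negPn/negP => zG.
have := fG z zG.
have := r_sub (z |: S) G.
have -> : (z |: S) :|: G = z |: G.
  apply/setP => w; rewrite !inE; case: (w == z) => //=.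
  by case wS: (w \in S) => //=; rewrite (subsetP sSG).
have -> : (z |: S) :&: G = S.
  apply/setP => w; rewrite !inE; case: (eqVneq w z) => [->|] /=.
    by rewrite (negbTE zG); apply/esym/negP => zS; rewrite (subsetP sSG) in zG.
  by case wS: (w \in S) => //=; rewrite (subsetP sSG).
rewrite ez; lia.
Qed.

Lemma flat_cl G : flat r G -> cl r G = G.
Proof. by move=> fG; apply/eqP; rewrite eqEsubset cl_min ?sub_cl. Qed.

Lemma flat_eq G1 G2 : flat r G1 -> G1 \subset G2 -> r G2 <= r G1 -> G1 = G2.
Proof.
move=> f1 s12 rl; apply/eqP; rewrite eqEsubset s12; apply/subsetP => z zG2.
apply/negPn/negP => zn; have := f1 z zn.
have := r_mono (A:= z |: G1) (B:=G2); rewrite subUset sub1set zG2 s12 => /(_ isT).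
lia.
Qed.

Lemma loops_sub G : flat r G -> bot_flat r \subset G.
Proof. by move=> fG; apply: cl_min; rewrite ?sub0set. Qed.

Lemma r_loops : r (bot_flat r) = 0.
Proof. by rewrite /bot_flat r_cl r0. Qed.

End M.


Section E.
Variable T : finType.
Variable r : {set T} -> nat.
Variable MC : {set {set T}}.
Variable F : {set T}.
Hypothesis hr : is_matroid_rank r.
Hypothesis hMC : proper_modular_cut r MC.
Hypothesis hF : minimal_in MC F.
Implicit Types (A B S G : {set T}) (W : {set option T}).

Local Notation E := (ext_rank r MC).
Local Notation Sp S := (Some @: S).

Lemma in_Sp S y : (Some y \in Sp S) = (y \in S).
Proof. by apply: mem_imset; move=> a b [->]. Qed.
Lemma None_Sp S : (None \in Sp S) = false.
Proof. by apply/negbTE/imsetP => [[x _]]. Qed.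

Lemma restr_Sp S : restrict_some (Sp S) = S.
Proof. by apply/setP => x; rewrite inE in_Sp. Qed.
Lemma restr_NSp S : restrict_some (None |: Sp S) = S.
Proof. by apply/setP => x; rewrite !inE in_Sp. Qed.

Lemma split_N W : None \notin W -> W = Sp (restrict_some W).
Proof.
move=> nW; apply/setP => [[x|]]; first by rewrite in_Sp inE.
by rewrite None_Sp (negbTE nW).
Qed.
Lemma split_Y W : None \in W -> W = None |: Sp (restrict_some W).
Proof.
move=> nW; apply/setP => [[x|]]; first by rewrite !inE in_Sp inE.
by rewrite !inE nW.
Qed.

Lemma E_Sp S : E (Sp S) = r S.
Proof. by rewrite /ext_rank None_Sp restr_Sp. Qed.
Lemma E_NSp S : E (None |: Sp S) = if cl r S \in MC then r S else (r S).+1.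
Proof. by rewrite /ext_rank restr_NSp setU11. Qed.
Lemma E_NSp_ge S : r S <= E (None |: Sp S).
Proof. by rewrite E_NSp; case: ifP. Qed.

Lemma Sp_add y S : Some y |: Sp S = Sp (y |: S).
Proof. by rewrite imsetU1. Qed.
Lemma NSp_add y S : Some y |: (None |: Sp S) = None |: Sp (y |: S).
Proof. by rewrite setUCA Sp_add. Qed.

Lemma mc_flat G : G \in MC -> flat r G. Proof. by case: hMC => -[h _ _] _; apply: h. Qed.
Lemma mc_up G H : G \in MC -> flat r H -> G \subset H -> H \in MC.
Proof. by case: hMC => -[_ h _] _; apply: h. Qed.
Lemma mc_mod G H : G \in MC -> H \in MC -> modular_pair r G H -> G :&: H \in MC.
Proof. by case: hMC => -[_ _ h] _; apply: h. Qed.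
Lemma mc_bot : bot_flat r \notin MC. Proof. by case: hMC. Qed.
Lemma FMC : F \in MC. Proof. by case: hF. Qed.
Lemma fF : flat r F. Proof. exact: mc_flat FMC. Qed.
Lemma F_min G : G \in MC -> G \subset F -> G = F. Proof. by case: hF => _; apply. Qed.
Lemma notMC G : G \subset F -> G <> F -> G \notin MC.
Proof. by move=> s n; apply/negP => m; apply: n; apply: F_min. Qed.
Lemma cl_MC S : F \subset S -> cl r S \in MC.
Proof. move=> s; apply: (mc_up FMC); first exact: cl_flat. apply: subset_trans s _; exact: sub_cl. Qed.


Lemma FE1 G : flat r G -> G \notin MC -> flat E (Sp G).
Proof.
move=> fG nG [y|]; rewrite ?in_Sp ?None_Sp => yn.
  by rewrite Sp_add !E_Sp; apply: fG.
by rewrite E_NSp E_Sp flat_cl // (negbTE nG).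
Qed.

Lemma FE2 G : flat E (Sp G) -> flat r G.
Proof.
move=> fE y yn; have := fE (Some y); rewrite in_Sp Sp_add !E_Sp; exact.
Qed.

Lemma FE3 G : flat E (None |: Sp G) -> flat r G.
Proof.
move=> fE y yn; have := fE (Some y); rewrite !inE in_Sp (negbTE yn) NSp_add !E_NSp => /(_ isT) h.
rewrite ltn_neqAle r_addS // andbT; case: (eqVneq (r G) (r (y |: G))) => //= e.
by move: h; rewrite cl_absorb // -e; case: ifP; rewrite ltnn.
Qed.

Lemma FE_restr W : flat E W -> flat r (restrict_some W).
Proof.
case: (boolP (None \in W)) => nW fW.
  by apply: FE3; rewrite -split_Y.
by apply: FE2; rewrite -split_N.
Qed.

Lemma Sp_sub S W : S \subset restrict_some W -> Sp S \subset W.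
Proof. move=> s; apply/subsetP => _ /imsetP [y yS ->]; by have := subsetP s y yS; rewrite inE. Qed.

Lemma restr_sub S W : Sp S \subset W -> S \subset restrict_some W.
Proof. move=> s; apply/subsetP => y yS; rewrite inE (subsetP s) // in_Sp //. Qed.

Lemma Fb : flat E (Sp (bot_flat r)).
Proof. apply: FE1; [exact: cl_flat | exact: mc_bot]. Qed.

Lemma Fb_sub W : flat E W -> Sp (bot_flat r) \subset W.
Proof. by move=> fW; apply: Sp_sub; apply: loops_sub => //; apply: FE_restr. Qed.

Lemma FE4 W : flat E W -> Sp F \subset W -> None \in W.
Proof.
move=> fW sF; apply/negPn/negP => nW.
have := fW None nW; rewrite {1 2}(split_N nW) E_Sp E_NSp cl_MC ?ltnn //.
exact: restr_sub.
Qed.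

Lemma FH : flat E (None |: Sp F).
Proof.
move=> [y|]; rewrite ?inE ?in_Sp //= => yn.
rewrite NSp_add (E_NSp F) (flat_cl hr fF) FMC.
apply: (leq_trans _ (E_NSp_ge _)); exact: fF.

Qed.

Lemma H_sub W : None \in W -> F \subset restrict_some W -> None |: Sp F \subset W.
Proof. by move=> nW s; rewrite subUset sub1set nW Sp_sub. Qed.

Lemma sub_H_restr W : W \subset None |: Sp F -> restrict_some W \subset F.
Proof. move=> s; apply/subsetP => y; rewrite inE => yW; have := subsetP s _ yW; by rewrite !inE in_Sp. Qed.

Local Notation HH := (None |: Sp F).
Local Notation bb := (Sp (bot_flat r)).

Lemma core (H1 H2 : {set option T}) (phi : {set option T} -> {set option T} -> {set option T}) :
  flat E H1 -> flat E H2 -> H1 <> bb -> phi H1 H2 = HH ->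
  (forall K1 K2, flat E K1 -> K1 \subset H1 -> flat E K2 -> K2 \subset H2 ->
     flat E (phi K1 K2) /\ phi K1 K2 \subset HH) ->
  (forall K, flat E K -> K \subset HH -> exists K1 K2,
     [/\ flat E K1, K1 \subset H1, flat E K2, K2 \subset H2 & phi K1 K2 = K]) ->
  (forall K1 K2 K1x K2x,
     flat E K1 -> K1 \subset H1 -> flat E K2 -> K2 \subset H2 ->
     flat E K1x -> K1x \subset H1 -> flat E K2x -> K2x \subset H2 ->
     (phi K1 K2 \subset phi K1x K2x <-> (K1 \subset K1x) /\ (K2 \subset K2x))) ->
  None \in phi bb H2 ->
  (forall y, y \in F -> Some y \in phi H1 bb \/ Some y \in phi bb H2) -> False.
Proof.
move=> fH1 fH2 nH1 eH hphi hsurj hiff nY hcov.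
have b1 := Fb_sub fH1; have b2 := Fb_sub fH2.
have [fY sY] := hphi _ _ Fb b1 fH2 (subxx _).
have eY := split_Y nY.
set Y' := restrict_some (phi bb H2) in eY.
have fY' : flat r Y' by apply: FE_restr.
have sY'F : Y' \subset F by apply: sub_H_restr.
have nY'F : Y' <> F.
  move=> e; have : HH \subset phi bb H2 by rewrite eY e.
  rewrite -{1}eH => /(hiff _ _ _ _ fH1 (subxx _) fH2 (subxx _) Fb b1 fH2 (subxx _)) [h _].
  by apply: nH1; apply/eqP; rewrite eqEsubset h b1.
have fZ : flat E (Sp Y') by apply: FE1 => //; apply: notMC.
have sZH : Sp Y' \subset HH by apply: subset_trans (subsetUr _ _); apply: imsetS.
have [z1 [z2 [fz1 sz1 fz2 sz2 ez]]] := hsurj _ fZ sZH.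
have zb : z1 \subset bb.
  have : Sp Y' \subset phi bb H2 by have := subsetUr [set None] (Sp Y'); rewrite -eY.
  by rewrite -ez => /(hiff _ _ _ _ fz1 sz1 fz2 sz2 Fb b1 fH2 (subxx _)) [].
have [fW sW] := hphi _ _ fH1 (subxx _) fz2 sz2.
have XW : phi H1 bb \subset phi H1 z2.
  by apply/(hiff _ _ _ _ fH1 (subxx _) Fb b2 fH1 (subxx _) fz2 sz2); rewrite subxx Fb_sub.
have ZW : Sp Y' \subset phi H1 z2.
  by rewrite -ez; apply/(hiff _ _ _ _ fz1 sz1 fz2 sz2 fH1 (subxx _) fz2 sz2); rewrite subxx sz1.
have FW : Sp F \subset phi H1 z2.
  apply/subsetP => _ /imsetP [y yF ->]; case: (hcov y yF) => h.
    exact: (subsetP XW).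
  by apply: (subsetP ZW); rewrite in_Sp /Y' inE.
have NW := FE4 fW FW.
have : HH \subset phi H1 z2 by apply: H_sub => //; apply: restr_sub.
rewrite -{1}eH => /(hiff _ _ _ _ fH1 (subxx _) fH2 (subxx _) fH1 (subxx _) fz2 sz2) [_ h2].
have : phi bb H2 \subset phi z1 z2.
  by apply/(hiff _ _ _ _ Fb b1 fH2 (subxx _) fz1 sz1 fz2 sz2); rewrite h2 Fb_sub.
by rewrite ez => /subsetP /(_ _ nY); rewrite None_Sp.
Qed.

Definition DP (H1 H2 : {set option T}) (phi : {set option T} -> {set option T} -> {set option T}) : Prop :=
 [/\ flat E H1, H1 \subset HH, flat E H2, H2 \subset HH &
  [/\ (forall K1 K2, flat E K1 -> K1 \subset H1 -> flat E K2 -> K2 \subset H2 ->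
     flat E (phi K1 K2) /\ phi K1 K2 \subset HH),
  (forall K, flat E K -> K \subset HH -> exists K1 K2,
     [/\ flat E K1, K1 \subset H1, flat E K2, K2 \subset H2 & phi K1 K2 = K]) &
  (forall K1 K2 K1x K2x,
     flat E K1 -> K1 \subset H1 -> flat E K2 -> K2 \subset H2 ->
     flat E K1x -> K1x \subset H1 -> flat E K2x -> K2x \subset H2 ->
     (phi K1 K2 \subset phi K1x K2x <-> (K1 \subset K1x) /\ (K2 \subset K2x)))]].

Lemma DP_swap H1 H2 phi : DP H1 H2 phi -> DP H2 H1 (fun a b => phi b a).
Proof.
move=> [f1 s1 f2 s2 [hp hs hi]]; split => //; split.
- by move=> K1 K2 a b c d; apply: hp.
- move=> K fK sK; have [K1 [K2 [a b c d e]]] := hs K fK sK; by exists K2, K1.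
- move=> K1 K2 K1x K2x a b c d e f g h; rewrite hi //; tauto.
Qed.

Lemma DP_top H1 H2 phi : DP H1 H2 phi -> phi H1 H2 = HH.
Proof.
move=> [f1 s1 f2 s2 [hp hs hi]].
have [g1 [g2 [a b c d e]]] := hs _ FH (subxx _).
have [_ h] := hp _ _ f1 (subxx _) f2 (subxx _).
apply/eqP; rewrite eqEsubset h /= -{1}e.
by apply/(hi _ _ _ _ a b c d f1 (subxx _) f2 (subxx _)).
Qed.

Lemma DP_bot H1 H2 phi : DP H1 H2 phi -> phi bb bb = bb.
Proof.
move=> [f1 s1 f2 s2 [hp hs hi]].
have sbH : bb \subset HH by apply: Fb_sub FH.
have [g1 [g2 [a b c d e]]] := hs _ Fb sbH.
have [fp _] := hp _ _ Fb (Fb_sub f1) Fb (Fb_sub f2).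
apply/eqP; rewrite eqEsubset (Fb_sub fp) andbT.
have : phi bb bb \subset phi g1 g2.
  by apply/(hi _ _ _ _ Fb (Fb_sub f1) Fb (Fb_sub f2) a b c d); rewrite !Fb_sub.
by rewrite e.
Qed.

Lemma DP_atom H1 H2 phi Q : DP H1 H2 phi ->
  flat E Q -> Q \subset HH -> Q <> bb ->
  (forall K, flat E K -> K \subset Q -> K = bb \/ K = Q) ->
  Q \subset phi H1 bb \/ Q \subset phi bb H2.
Proof.
move=> D; have eb := DP_bot D; move: D => [f1 s1 f2 s2 [hp hs hi]] fA sA nA hA.
have [a1 [a2 [fa1 sa1 fa2 sa2 ea]]] := hs _ fA sA.
have b1 := Fb_sub f1; have b2 := Fb_sub f2.
case: (boolP (a1 \subset bb)) => h1.
  by right; rewrite -ea; apply/(hi _ _ _ _ fa1 sa1 fa2 sa2 Fb b1 f2 (subxx _)).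
case: (boolP (a2 \subset bb)) => h2.
  by left; rewrite -ea; apply/(hi _ _ _ _ fa1 sa1 fa2 sa2 f1 (subxx _) Fb b2).
have [fG sG] := hp _ _ fa1 sa1 Fb b2.
have : phi a1 bb \subset Q.
  by rewrite -ea; apply/(hi _ _ _ _ fa1 sa1 Fb b2 fa1 sa1 fa2 sa2); rewrite subxx Fb_sub.
move=> /(hA _ fG) [e|e].
  have : phi a1 bb \subset phi bb bb by rewrite e eb.
  by move/(hi _ _ _ _ fa1 sa1 Fb b2 Fb b1 Fb b2) => [h _]; rewrite h in h1.
have : phi a1 a2 \subset phi a1 bb by rewrite e ea.
by move/(hi _ _ _ _ fa1 sa1 fa2 sa2 fa1 sa1 Fb b2) => [_ h]; rewrite h in h2.
Qed.

Lemma one_pt w : w \notin bot_flat r -> r (w |: bot_flat r) = 1.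
Proof.
move=> wn; apply/eqP; rewrite eqn_leq; apply/andP; split.
  by have := r_add1 hr (bot_flat r) w; rewrite r_loops.
move: wn; rewrite inE (r0 hr) -lt0n => h.
have := r_mono hr (A := w |: set0) (B := w |: bot_flat r); rewrite setUS ?sub0set // => /(_ isT).
lia.
Qed.

Lemma exch y z : y \notin bot_flat r -> z \notin bot_flat r ->
  z \in cl r (y |: bot_flat r) -> y \in cl r (z |: bot_flat r).
Proof.
move=> yn zn; rewrite !inE => /eqP e; apply/eqP.
by rewrite setUCA e !one_pt.
Qed.

Lemma exists_nl : exists2 y, y \in F & y \notin bot_flat r.
Proof.
have bF := loops_sub hr fF.
case: (boolP (F \subset bot_flat r)) => h.
  have e : F = bot_flat r by apply/eqP; rewrite eqEsubset h bF.
  by have := FMC; rewrite e (negbTE mc_bot).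
by case/subsetPn: h => y; exists y.
Qed.

Lemma cl_bot : cl r (bot_flat r) = bot_flat r.
Proof. by apply: flat_cl => //; apply: cl_flat. Qed.

Lemma yb_sub y : y \in F -> y |: bot_flat r \subset F.
Proof. by move=> yF; rewrite subUset sub1set yF (loops_sub hr fF). Qed.

Lemma rank1_cls : r F <= 1 -> forall W, flat E W -> W \subset HH -> W = bb \/ W = HH.
Proof.
move=> r1 W fW sW.
have fW' : flat r (restrict_some W) := FE_restr fW.
have sW'F : restrict_some W \subset F := sub_H_restr sW.
have [y yF yn] := exists_nl.
have ry : 1 <= r F by rewrite -(one_pt yn); apply: r_mono => //; apply: yb_sub.
case: (eqVneq (restrict_some W) F) => [eF|nF].
  have nW : None \in W by apply: FE4 => //; apply: Sp_sub; rewrite eF.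
  by right; apply/eqP; rewrite eqEsubset sW H_sub // eF.
have rW0 : r (restrict_some W) = 0.
  case: (leqP (r F) (r (restrict_some W))) => h; last by lia.
  by rewrite (flat_eq hr fW' sW'F h) eqxx in nF.
have eW' : restrict_some W = bot_flat r.
  apply/eqP; rewrite eqEsubset loops_sub // andbT; apply/subsetP => z zW.
  rewrite inE (r0 hr); have := r_mono hr (A := z |: set0) (B := restrict_some W).
  by rewrite subUset sub1set zW sub0set rW0 => /(_ isT); rewrite leqn0.
case: (boolP (None \in W)) => nW; last by left; rewrite (split_N nW) eW'.
exfalso.
have Pe : cl r (y |: bot_flat r) = F.
  apply: (flat_eq hr); first exact: cl_flat.
    by apply: cl_min => //; [exact: fF | exact: yb_sub].
  by rewrite r_cl // one_pt.
have := fW (Some y); rewrite {1}(split_Y nW) !inE in_Sp eW' (negbTE yn) => /(_ isT).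
rewrite (split_Y nW) eW' NSp_add !E_NSp Pe FMC cl_bot (negbTE mc_bot) r_loops // one_pt //.
Qed.

Lemma a_flat : 1 < r F -> flat E (None |: bb).
Proof.
move=> r2 [y|]; rewrite !inE ?in_Sp //= => yn.
rewrite NSp_add !E_NSp cl_bot (negbTE mc_bot) (r_loops hr) one_pt //.
case: ifP => // PM; exfalso.
set P := cl r (y |: bot_flat r) in PM.
case: (boolP (y \in F)) => yF.
  have e : P = F by apply: F_min => //; apply: cl_min => //; [exact: fF | exact: yb_sub].
  by have := r_cl hr (y |: bot_flat r); rewrite -/P e one_pt //; lia.
have FPb : F :&: P \subset bot_flat r.
  apply/subsetP => z; rewrite inE => /andP [zF zP]; apply/negPn/negP => zn.
  have yc := exch yn zn zP.
  have := cl_min hr fF (yb_sub zF).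
  by move/subsetP/(_ _ yc); rewrite (negbTE yF).
have r0FP : r (F :&: P) = 0.
  by apply/eqP; rewrite -leqn0 -(r_loops hr); apply: r_mono.
have rP : r P = 1 by rewrite /P r_cl // one_pt.
have mp : modular_pair r F P.
  rewrite /modular_pair /fjoin r_cl // r0FP rP addn0.
  apply/eqP; rewrite eqn_leq; apply/andP; split.
    by have := r_sub hr F P; rewrite r0FP rP; lia.
  have := fF yF.
  have := r_mono hr (A := y |: F) (B := F :|: P).
  have yP : y \in P by apply: (subsetP (sub_cl r _)); rewrite setU11.
  rewrite subUset sub1set inE yP orbT subsetUl => /(_ isT).
  lia.
have IM := mc_mod FMC PM mp.
have eI : F :&: P = F := F_min IM (subsetIl _ _).
have Fb : F \subset bot_flat r by rewrite -eI.
by have [w wF wn] := exists_nl; rewrite (subsetP Fb) in wn.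
Qed.

Lemma a_atom K : flat E K -> K \subset None |: bb -> K = bb \/ K = None |: bb.
Proof.
move=> fK sK; have bK := Fb_sub fK.
case: (boolP (None \in K)) => nK.
  by right; apply/eqP; rewrite eqEsubset sK subUset sub1set nK bK.
left; apply/eqP; rewrite eqEsubset bK andbT; apply/subsetP => x xK.
have := subsetP sK x xK; rewrite !inE; case: eqP => [e|//].
by move: xK; rewrite e (negbTE nK).
Qed.

Lemma Ay_flat y : 1 < r F -> y \in F -> y \notin bot_flat r ->
  flat E (Sp (cl r (y |: bot_flat r))) /\ Sp (cl r (y |: bot_flat r)) \subset HH.
Proof.
move=> r2 yF yn.
have sF : cl r (y |: bot_flat r) \subset F by apply: cl_min => //; [exact: fF | exact: yb_sub].
split; last by apply: subset_trans (subsetUr _ _); apply: imsetS.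
apply: FE1; first exact: cl_flat.
apply: notMC => // e; have := r_cl hr (y |: bot_flat r); rewrite e one_pt //; lia.
Qed.

Lemma Ay_atom y : y \notin bot_flat r -> forall K, flat E K ->
  K \subset Sp (cl r (y |: bot_flat r)) -> K = bb \/ K = Sp (cl r (y |: bot_flat r)).
Proof.
move=> yn K fK sK.
have nK : None \notin K by apply/negP => /(subsetP sK); rewrite None_Sp.
have fK' := FE_restr fK.
have eK := split_N nK.
have sK' : restrict_some K \subset cl r (y |: bot_flat r).
  by apply/subsetP => z; rewrite inE => /(subsetP sK); rewrite in_Sp.
case: (boolP (y \in restrict_some K)) => yK.
  have e : restrict_some K = cl r (y |: bot_flat r).
    apply/eqP; rewrite eqEsubset sK' cl_min //.
    by rewrite subUset sub1set yK loops_sub.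
  by right; rewrite eK e.
have e : restrict_some K = bot_flat r.
  apply/eqP; rewrite eqEsubset loops_sub // andbT.
  apply/subsetP => z zK; apply/negPn/negP => zn.
  have yc := exch yn zn (subsetP sK' _ zK).
  have := cl_min hr fK' (S:=z |: bot_flat r).
  rewrite subUset sub1set zK loops_sub // => /(_ isT) /subsetP /(_ _ yc).
  by rewrite (negbTE yK).
by left; rewrite eK e.
Qed.

Lemma bot_E : bot_flat E = bb.
Proof.
apply/setP => [[y|]]; rewrite /bot_flat inE.
  rewrite -(imset0 Some) Sp_add !E_Sp in_Sp inE //.
rewrite -(imset0 Some) E_NSp E_Sp.
by have := mc_bot; rewrite /bot_flat None_Sp (r0 hr) => /negbTE ->.
Qed.

Lemma main_contra : ~ nontrivial_decomposition E HH.
Proof.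
move=> [H1 [H2 [phi [[f1 s1 f2 s2] [n1 n2] hp hs hi]]]].
rewrite bot_E in n1 n2.
have D : DP H1 H2 phi by [].
have eb := DP_bot D; have et := DP_top D.
have b1 := Fb_sub f1; have b2 := Fb_sub f2.
have [fX sX] := hp H1 bb f1 (subxx _) Fb b2.
case: (leqP (r F) 1) => rF.
  case: (rank1_cls rF fX sX) => e.
    have : phi H1 bb \subset phi bb bb by rewrite e eb.
    move/(hi _ _ _ _ f1 (subxx _) Fb b2 Fb b1 Fb b2) => [h _].
    by apply: n1; apply/eqP; rewrite eqEsubset h b1.
  have : phi H1 H2 \subset phi H1 bb by rewrite e et.
  move/(hi _ _ _ _ f1 (subxx _) f2 (subxx _) f1 (subxx _) Fb b2) => [_ h].
  by apply: n2; apply/eqP; rewrite eqEsubset h b2.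
have fa := a_flat rF.
have sa : None |: bb \subset HH by rewrite setUS // imsetS // loops_sub //; exact: fF.
have na : None |: bb <> bb by move/setP/(_ None); rewrite setU11 None_Sp.
have cov : forall y, y \in F -> Some y \in phi H1 bb \/ Some y \in phi bb H2.
  move=> y yF; case: (boolP (y \in bot_flat r)) => yn.
    by left; apply: (subsetP (Fb_sub fX)); rewrite in_Sp.
  have [fA sA] := Ay_flat rF yF yn.
  have nA : Sp (cl r (y |: bot_flat r)) <> bb.
    move/setP/(_ (Some y)); rewrite !in_Sp (negbTE yn) (subsetP (sub_cl r _)) ?setU11 //.
  have yA : Some y \in Sp (cl r (y |: bot_flat r)).
    by rewrite in_Sp (subsetP (sub_cl r _)) ?setU11.
  case: (DP_atom D fA sA nA (Ay_atom yn)) => h; [left|right]; exact: (subsetP h).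
have [f1' s1' f2' s2' [hp' hs' hi']] := DP_swap D.
case: (DP_atom D fa sa na a_atom) => ha.
  apply: (core f2 f1 n2 (DP_top (DP_swap D)) hp' hs' hi').
    by apply: (subsetP ha); rewrite setU11.
  by move=> y yF; case: (cov y yF); tauto.
apply: (core f1 f2 n1 et hp hs hi) => //.
by apply: (subsetP ha); rewrite setU11.
Qed.

End E.

Theorem lemma2p19 (T : finType) (r : {set T} -> nat) (MC : {set {set T}})
    (F : {set T}) :
  is_matroid_rank r ->
  proper_modular_cut r MC ->
  minimal_in MC F ->
  irreducible_flat (ext_rank r MC) (None |: (Some @: F)).
Proof.
move=> hr hMC hF; split.
  exact: (FH hr hMC hF).
exact: (main_contra hr hMC hF).
Qed.
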